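(* Let $t\ge3$ be an integer. Every $t$-mansion is $(2P_3,C_4,C_6,C_7,T_0)$-free and contains an induced $t$-pentagon. Moreover, every $t$-mansion is anticonnected and contains no simplicial and no universal vertices.
   Context: Graphs are finite, simple, nonnull. A graph is $(H_1,\dots,H_m)$-free if it has no induced subgraph isomorphic to any $H_i$. $P_k$, $C_k$ are the path and cycle on $k$ vertices; $2P_3$ is two disjoint copies of $P_3$. $T_0$ is the graph with vertices $p,q,u_0,u_1,u_2,u_3,w_1,w_2,w_3$ and edges $pq,pu_0,pu_2,pu_3,qu_1,qu_2,qu_3,u_0w_1,u_1w_1,u_2w_2,u_3w_3,w_1w_2,w_1w_3,w_2w_3$. For $t\ge3$ the $t$-pentagon is the graph on vertices $a,b_1,\dots,b_t,c_1,\dots,c_t$ where $a$ is adjacent to every $b_i$ and to no $c_i$, $\{b_1,\dots,b_t\}$ is stable, $\{c_1,\dots,c_t\}$ is a clique, and $b_ic_j$ is an edge iff $i=j$. A graph is anticonnected if its complement is connected. A vertex is simplicial if its neighbours form a (possibly empty) clique, universal if adjacent to all other vertices. For disjoint vertex sets $X,Y$, $X$ is complete (anticomplete) to $Y$ if every vertex of $X$ is adjacent (nonadjacent) to every vertex of $Y$. $t$-villa: a graph whose vertex set partitions into nonempty cliques $A,B_1,\dots,B_t,C_1,\dots,C_t$ such that $A$ is complete to $B_1\cup\dots\cup B_t$ and anticomplete to $C_1\cup\dots\cup C_t$; the $B_i$ are pairwise anticomplete; the $C_i$ are pairwise complete; $B_i$ is anticomplete to $C_j$ for $i\ne j$; each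 $B_i$ can be ordered $b^i_1,\dots,b^i_{r_i}$ with $\emptyset\ne N(b^i_{r_i})\cap C_i\subseteq\dots\subseteq N(b^i_1)\cap C_i=C_i$; this is a $t$-villa partition $(A;B_1,\dots,B_t;C_1,\dots,C_t)$. $t$-mansion: a graph $Q$ whose vertex set partitions into cliques $A,B_1,\dots,B_t,C_1,\dots,C_t,F,X,Y$, with $A,B_i,C_i,F$ nonempty ($X,Y$ possibly empty), such that $Q[A\cup B_1\cup\dots\cup B_t\cup C_1\cup\dots\cup C_t]$ is a $t$-villa with $t$-villa partition $(A;B_1,\dots,B_t;C_1,\dots,C_t)$; there is $j^*\in\{1,\dots,t\}$ such that $F$ is complete to $A$, to $\bigcup_{i\ne j^*}B_i$ and to $\bigcup_{i\ne j^*}C_i$ and anticomplete to $B_{j^*}\cup C_{j^*}$, $B_{j^*}$ is complete to $C_{j^*}$, and $X$ is complete to $A\cup B_{j^*}$ and anticomplete to $\bigcup_{i\ne j^*}B_i$ and to $C_1\cup\dots\cup C_t$; $F$ is complete to $X\cup Y$; $X$ is anticomplete to $Y$; $Y$ is complete to $C_1\cup\dots\cup C_t$ and anticomplete to $A\cup B_1\cup\dots\cup B_t$. *)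

(* Defs.v *)
(* Simple graphs: symmetric irreflexive e : rel T, T : finType. *)
From mathcomp Require Import all_boot.
Set Implicit Arguments. Unset Strict Implicit. Unset Printing Implicit Defensive.

Section Graphs.
Variables (T : finType) (e : rel T).

Definition clique (S : {set T}) : Prop :=
  forall x y, x \in S -> y \in S -> x != y -> e x y.

Definition complete (X Y : {set T}) : Prop :=
  forall x y, x \in X -> y \in Y -> e x y.

Definition anticomplete (X Y : {set T}) : Prop :=
  forall x y, x \in X -> y \in Y -> ~~ e x y.

Definition has_induced (V : finType) (eH : rel V) : Prop :=
  exists f : V -> T, injective f /\ forall x y, e (f x) (f y) = eH x y.

Definition complement_rel : rel T := fun x y => (x != y) && ~~ e x y.

Definition anticonnected : Prop :=
  forall x y : T, connect complement_rel x y.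

Definition simplicial (x : T) : Prop :=
  forall y z, e x y -> e x z -> y != z -> e y z.

Definition universal (x : T) : Prop :=
  forall y, y != x -> e x y.

End Graphs.

Definition edge_rel (k : nat) (s : seq (nat * nat)) : rel 'I_k :=
  fun x y => (((x : nat), (y : nat)) \in s) || (((y : nat), (x : nat)) \in s).

Definition twoP3 : rel 'I_6 := @edge_rel 6 [:: (0,1); (1,2); (3,4); (4,5)]%N.

Definition cycle_rel (k : nat) : rel 'I_k :=
  fun x y => ((x.+1 %% k)%N == y) || ((y.+1 %% k)%N == x).

(* T0 with p=0, q=1, u0=2, u1=3, u2=4, u3=5, w1=6, w2=7, w3=8 *)
Definition T0 : rel 'I_9 := @edge_rel 9
  [:: (0,1); (0,2); (0,4); (0,5); (1,3); (1,4); (1,5); (2,6); (3,6); (4,7);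
      (5,8); (6,7); (6,8); (7,8)]%N.

(* t-pentagon: None = a, Some (inl i) = b_i, Some (inr i) = c_i *)
Definition pentagon_rel (t : nat) : rel (option ('I_t + 'I_t)) :=
  fun x y =>
    match x, y with
    | None, Some (inl _) => true
    | Some (inl _), None => true
    | Some (inr i), Some (inr j) => i != j
    | Some (inl i), Some (inr j) => i == j
    | Some (inr i), Some (inl j) => i == j
    | _, _ => false
    end.

Inductive mlabel (t : nat) :=
  LA | LB of 'I_t | LC of 'I_t | LF | LX | LY.

Section Mansion.
Variables (T : finType) (e : rel T) (t : nat).

Definition nbr_in (b : T) (S : {set T}) : {set T} := [set c in S | e b c].

(* The partition is given by the labelling lab : T -> mlabel t;
   the parts are the preimages of the labels. *)
Definition mansion (lab : T -> mlabel t) (jstar : 'I_t) : Prop :=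
  let A := [set x | if lab x is LA then true else false] in
  let B := fun i => [set x | if lab x is LB k then k == i else false] in
  let C := fun i => [set x | if lab x is LC k then k == i else false] in
  let F := [set x | if lab x is LF then true else false] in
  let X := [set x | if lab x is LX then true else false] in
  let Y := [set x | if lab x is LY then true else false] in
  [/\
      (clique e A /\ (forall i, clique e (B i)) /\ (forall i, clique e (C i)) /\
          clique e F /\ clique e X /\ clique e Y),
      [/\ A != set0, (forall i, B i != set0), (forall i, C i != set0) & F != set0],
      ((forall i, complete e A (B i)) /\ (forall i, anticomplete e A (C i)) /\
          (forall i j, i != j -> anticomplete e (B i) (B j)) /\
          (forall i j, i != j -> complete e (C i) (C j)) /\
          (forall i j, i != j -> anticomplete e (B i) (C j)) /\
          (forall i, exists (b1 : T) (s : seq T),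
             [/\ perm_eq (b1 :: s) (enum (B i)),
                 path (fun b b' => nbr_in b' (C i) \subset nbr_in b (C i)) b1 s,
                 nbr_in b1 (C i) = C i &
                 nbr_in (last b1 s) (C i) != set0])),
      (complete e F A /\
          (forall i, i != jstar -> complete e F (B i)) /\
          (forall i, i != jstar -> complete e F (C i)) /\
          anticomplete e F (B jstar :|: C jstar) /\
          complete e (B jstar) (C jstar) /\
          complete e X (A :|: B jstar) /\
          (forall i, i != jstar -> anticomplete e X (B i)) /\
          (forall i, anticomplete e X (C i))) &
      [/\ complete e F (X :|: Y), anticomplete e X Y,
          (forall i, complete e Y (C i)) &
          (forall i, anticomplete e Y (A :|: B i))]].

End Mansion.

Definition is_mansion (T : finType) (e : rel T) (t : nat) : Prop :=
  exists (lab : T -> mlabel t) (jstar : 'I_t), mansion e lab jstar.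

(* Main.v *)
Require Import Defs.
From HB Require Import structures.
From mathcomp Require Import all_boot.
Set Implicit Arguments. Unset Strict Implicit. Unset Printing Implicit Defensive.

Inductive AL := aA | aF | aX | aY | aBJ | aCJ | aB of nat | aC of nat.
Definition kind (a : AL) : nat :=
  match a with aA => 0 | aF => 1 | aX => 2 | aY => 3 | aBJ => 4 | aCJ => 5 | aB _ => 6 | aC _ => 7 end.
Definition slot (a : AL) : nat := match a with aB n | aC n => n | _ => 0 end.
Definition decode (p : nat * nat) : option AL :=
  match p.1 with 0 => Some aA | 1 => Some aF | 2 => Some aX | 3 => Some aY | 4 => Some aBJ
  | 5 => Some aCJ | 6 => Some (aB p.2) | 7 => Some (aC p.2) | _ => None end.
Lemma codeK : pcancel (fun a => (kind a, slot a)) decode. Proof. by case. Qed.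
HB.instance Definition _ := Equality.copy AL (pcan_type codeK).

Definition edgesK : seq (nat * nat) :=
  [:: (0,1); (0,2); (0,4); (0,6); (1,2); (1,3); (1,7); (1,6); (2,4); (3,5); (3,7); (4,5); (5,7)].
Definition adjk (i j : nat) : bool := (i == j) || ((i, j) \in edgesK) || ((j, i) \in edgesK).

Definition allowed (a b : AL) (x : bool) : bool :=
  match a, b with
  | aB u, aB w => x == (u == w)
  | aC _, aC _ => x
  | aB u, aC w => (u == w) || ~~ x
  | aC w, aB u => (u == w) || ~~ x
  | _, _ => x == adjk (kind a) (kind b)
  end.

Section Search.
Variable H : nat -> nat -> bool.

Definition isBC (a : AL) := (kind a == 6) || (kind a == 7).
Definition ok_slot (ls : seq AL) (u : nat) :=
  (u == size ls) || (isBC (nth aA ls u) && (slot (nth aA ls u) == u)).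
Definition cands (ls : seq AL) : seq AL :=
  [:: aA; aF; aX; aY; aBJ; aCJ] ++
  flatten [seq [:: aB u; aC u] | u <- iota 0 (size ls).+1 & ok_slot ls u].
Definition consistent (ls : seq AL) (l : AL) :=
  all (fun u => allowed (nth aA ls u) l (H u (size ls))) (iota 0 (size ls)).
Definition chain_ok (ls : seq AL) :=
  let k := size ls in
  all (fun b => all (fun b' => all (fun c => all (fun c' =>
     ~~ [&& kind (nth aA ls b) == 6, nth aA ls b' == nth aA ls b,
            nth aA ls c == aC (slot (nth aA ls b)), nth aA ls c' == nth aA ls c,
            H b c, H b' c', ~~ H b c' & ~~ H b' c])
   (iota 0 k)) (iota 0 k)) (iota 0 k)) (iota 0 k).
Fixpoint search (n : nat) (ls : seq AL) : bool :=
  match n with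
  | 0 => chain_ok ls
  | n'.+1 => has (fun l => if consistent ls l then search n' (rcons ls l) else false) (cands ls)
  end.
Definition valid (ls : seq AL) :=
  all (fun v => (nth aA ls v \in cands (take v ls)) && consistent (take v ls) (nth aA ls v))
      (iota 0 (size ls)).
End Search.

Definition cycn (k : nat) (x y : nat) := ((x.+1 %% k) == y) || ((y.+1 %% k) == x).
Definition edn (s : seq (nat*nat)) (x y : nat) := ((x, y) \in s) || ((y, x) \in s).


Lemma search_take H full : valid H full -> chain_ok H full ->
  forall d m, m + d = size full -> search H d (take m full).
Proof.
move=> hv hc; elim=> [|d IH] m hm.
  by rewrite /= addn0 in hm; rewrite hm take_size.
have hlt : m < size full by rewrite -hm addnS ltnS leq_addr.
have := allP hv m; rewrite mem_iota add0n hlt => /(_ isT) /andP[hmem hcon].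
change (has (fun l => if consistent H (take m full) l then search H d (rcons (take m full) l) else false) (cands (take m full))).
apply/hasP; exists (nth aA full m) => //.
rewrite hcon -take_nth //; apply: IH; by rewrite addSnnS.
Qed.

Lemma search_sound H full : valid H full -> chain_ok H full -> search H (size full) [::].
Proof. move=> hv hc; have := search_take hv hc (m:=0) (erefl _); by rewrite take0. Qed.

Section Concrete.
Variables (T : finType) (e : rel T) (t : nat) (lab : T -> mlabel t) (J : 'I_t).
Hypothesis esym : symmetric e.
Hypothesis eirr : irreflexive e.
Hypothesis M : mansion e lab J.

Definition alpha (sl : 'I_t -> nat) (x : T) : AL :=
  match lab x with
  | LA => aA | LF => aF | LX => aX | LY => aY
  | LB i => if i == J then aBJ else aB (sl i)
  | LC i => if i == J then aCJ else aC (sl i)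
  end.

Ltac simpl_mem := rewrite ?inE /=;
  repeat match goal with H : lab ?z = _ |- context[lab ?z] => rewrite H /= end;
  repeat match goal with
    | H : (?a == ?b) = _ |- context[?a == ?b] => rewrite H
    | H : (?a == ?b) = _ |- context[?b == ?a] => rewrite eq_sym H end;
  rewrite /= ?eqxx ?orbT ?orTb //.
Ltac app F := first [ apply: F; solve [simpl_mem] | rewrite esym; apply: F; solve [simpl_mem] ].
Ltac edge_solve :=
 match goal with
 | F : _ |- _ => app F
 | F : _ |- _ => match goal with a : _ |- _ => let _ := constr:(a : 'I_t) in app (F a) end
 | F : _ |- _ => match goal with a : _ |- _ => let _ := constr:(a : 'I_t) in
     match goal with b : _ |- _ => let _ := constr:(b : 'I_t) in app (F a b) end end
 end.

Lemma allowed_sound (sl : 'I_t -> nat) (slI : injective sl) x y :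
  x != y -> allowed (alpha sl x) (alpha sl y) (e x y).
Proof.
move=> nxy.
have nyx : y != x by rewrite eq_sym.
move: M => [[cA [cB [cC [cF [cX cY]]]]] _ [AB [AC [BB [CC [BC _]]]]]
  [FA [FB [FC [FBC [BCJ [XAB [XB XC]]]]]]] [FXY XY YC YAB]].
rewrite /alpha; case Hx: (lab x) => [|i|i|||]; case Hy: (lab y) => [|j|j|||];
  try (case hi: (i == J)); try (case hj: (j == J)); rewrite /allowed /adjk /= ?eqb_id ?eqbF_neg.
all: rewrite ?(inj_eq slI); try rewrite [j == i]eq_sym.
all: try (case hij: (i == j)); rewrite ?(inj_eq slI) ?hij /= ?eqb_id ?eqbF_neg.
all: try done.
all: edge_solve.
Unshelve. all: exact J.
Qed.

Lemma chain_sound x x' c c' i : lab x = LB i -> lab x' = LB i -> lab c = LC i ->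
  lab c' = LC i -> e x c -> e x' c' -> ~~ e x c' -> ~~ e x' c -> False.
Proof.
move=> Hx Hx' Hc Hc' e1 e2 n1 n2.
move: M => [_ _ [_ [_ [_ [_ [_ Hch]]]]] _ _].
have [b1 [s [hp hpath _ _]]] := Hch i.
have xs : x \in b1 :: s by rewrite (perm_mem hp) mem_enum inE Hx.
have x's : x' \in b1 :: s by rewrite (perm_mem hp) mem_enum inE Hx'.
have Rtr : transitive (fun b b' => nbr_in e b' [set x | if lab x is LC k then k == i else false]
                          \subset nbr_in e b [set x | if lab x is LC k then k == i else false]).
  by move=> y z w h1 h2; exact: subset_trans h2 h1.
have Rrf : reflexive (fun b b' => nbr_in e b' [set x | if lab x is LC k then k == i else false]
                          \subset nbr_in e b [set x | if lab x is LC k then k == i else false]).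
  by move=> y; exact: subxx.
have := sorted_leq_index Rtr Rrf (hpath : sorted _ (b1 :: s)) _ _ xs x's.
have := sorted_leq_index Rtr Rrf (hpath : sorted _ (b1 :: s)) _ _ x's xs.
case: (leqP (index x (b1 :: s)) (index x' (b1 :: s))) => hle.
  move=> _ /(_ isT) /subsetP hsub.
  by have := hsub c'; rewrite /nbr_in !inE Hc' eqxx e2 (negbTE n1) => /(_ isT).
move=> /(_ (ltnW hle)) /subsetP hsub _.
by have := hsub c; rewrite /nbr_in !inE Hc eqxx e1 (negbTE n2) => /(_ isT).
Qed.

Definition idx (x : T) : option 'I_t :=
  match lab x with LB i | LC i => if i == J then None else Some i | _ => None end.

Lemma alpha_cases sl x : alpha sl x \in [:: aA; aF; aX; aY; aBJ; aCJ] \/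
  exists i, idx x = Some i /\ (alpha sl x = aB (sl i) \/ alpha sl x = aC (sl i)).
Proof.
rewrite /alpha /idx; case: (lab x) => [|i|i|||]; try by left.
  by case: (i == J); [left | right; exists i; split; [|left]].
by case: (i == J); [left | right; exists i; split; [|right]].
Qed.

Lemma alpha_idx sl x i : idx x = Some i -> alpha sl x = aB (sl i) \/ alpha sl x = aC (sl i).
Proof.
rewrite /alpha /idx; case: (lab x) => [|j|j|||] //; case: (j == J) => // [[->]]; by [left|right].
Qed.

Lemma alpha_B sl x s : alpha sl x = aB s -> exists i, lab x = LB i /\ sl i = s.
Proof.
rewrite /alpha; case: (lab x) => [|j|j|||] //; case: (j == J) => // [[<-]]; by exists j.
Qed.

Lemma alpha_C sl x s : alpha sl x = aC s -> exists i, lab x = LC i /\ sl i = s.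
Proof.
rewrite /alpha; case: (lab x) => [|j|j|||] //; case: (j == J) => // [[<-]]; by exists j.
Qed.

Lemma alpha_kind6 sl x : kind (alpha sl x) == 6 -> exists i, alpha sl x = aB (sl i).
Proof.
rewrite /alpha; case: (lab x) => [|j|j|||] //; case: (j == J) => //; by exists j.
Qed.

Section Embed.
Variables (n : nat) (f : 'I_n.+1 -> T) (Hn : nat -> nat -> bool).
Hypothesis finj : injective f.
Hypothesis hH : forall x y : 'I_n.+1, e (f x) (f y) = Hn x y.

Let g (v : nat) : T := f (inord v).
Let P (i : 'I_t) (u : nat) := idx (g u) == Some i.
Let appears i := has (P i) (iota 0 n.+1).
Let sl (i : 'I_t) : nat := if appears i then find (P i) (iota 0 n.+1) else n.+1 + i.

Lemma eg u v : u < n.+1 -> v < n.+1 -> e (g u) (g v) = Hn u v.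
Proof. by move=> hu hv; rewrite /g hH !inordK. Qed.

Lemma sl_lt i : appears i -> sl i < n.+1.
Proof. by move=> ha; rewrite /sl ha; move: ha; rewrite /appears has_find size_iota. Qed.

Lemma sl_P i : appears i -> idx (g (sl i)) = Some i.
Proof.
move=> ha; have := nth_find 0 ha.
have hf : find (P i) (iota 0 n.+1) < n.+1 by move: ha; rewrite /appears has_find size_iota.
by rewrite nth_iota // add0n /sl ha => /eqP.
Qed.

Lemma sl_min i v : v < n.+1 -> idx (g v) = Some i -> appears i /\ sl i <= v.
Proof.
move=> hv hi; have ha : appears i.
  by apply/hasP; exists v; rewrite ?mem_iota //= /P hi.
split=> //; rewrite /sl ha leqNgt; apply/negP => hlt.
have := before_find 0 hlt; rewrite nth_iota // add0n /P hi eqxx //.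
Qed.

Lemma slI : injective sl.
Proof.
move=> i j; case hi: (appears i); case hj: (appears j).
- move=> hij; have := sl_P hi; rewrite hij sl_P // => -[] //.
- by move=> hij; have := sl_lt hi; rewrite hij /sl hj /= ltnNge leq_addr.
- by move=> hij; have := sl_lt hj; rewrite -hij /sl hi /= ltnNge leq_addr.
- by rewrite /sl hi hj => /addnI /val_inj.
Qed.

Let ls := mkseq (fun v => alpha sl (g v)) n.+1.

Lemma ls_valid : valid Hn ls.
Proof.
apply/allP => v; rewrite size_mkseq mem_iota add0n => /andP[_ hv].
have szt : size (take v ls) = v by rewrite size_take size_mkseq hv.
rewrite nth_mkseq //; apply/andP; split.
  rewrite mem_cat; case: (alpha_cases sl (g v)) => [-> // | [i [hi ha]]].
  apply/orP; right; apply/flatten_mapP; exists (sl i).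
    have [hap hle] := sl_min hv hi.
    rewrite mem_filter mem_iota add0n szt ltnS hle andbT /ok_slot szt.
idtac.
    case: (ltngtP (sl i) v) => [hlt||->]; last by rewrite ?eqxx.

      rewrite nth_take // nth_mkseq ?sl_lt //.
      by case: (alpha_idx sl (sl_P hap)) => hh; rewrite hh /= eqxx.
    by move=> h; move: hle; rewrite leqNgt h.
  by case: ha => ->; rewrite !inE eqxx ?orbT.
apply/allP => u; rewrite szt mem_iota add0n => /andP[_ hu].
have hun : u < n.+1 by apply: ltn_trans hu hv.
rewrite nth_take // nth_mkseq // -eg //; apply: allowed_sound; first exact: slI.
rewrite (inj_eq finj); apply/negP => /eqP /(congr1 val); rewrite /= !inordK // => huv.
by move: hu; rewrite huv ltnn.
Qed.

Lemma ls_chain : chain_ok Hn ls.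
Proof.
apply/allP => b; rewrite size_mkseq mem_iota add0n => /andP[_ hb].
apply/allP => b'; rewrite mem_iota add0n => /andP[_ hb'].
apply/allP => c; rewrite mem_iota add0n => /andP[_ hc].
apply/allP => c'; rewrite mem_iota add0n => /andP[_ hc'].
rewrite !nth_mkseq //.
apply/negP => /andP[h1 /andP[/eqP h2 /andP[/eqP h3 /andP[/eqP h4 /andP[e1 /andP[e2 /andP[n1 n2]]]]]]].
have [i hbi] := alpha_kind6 h1.
rewrite hbi /= in h2 h3; rewrite h3 in h4.
have [i0 [L1 s1]] := alpha_B hbi; move/slI: s1 => s1; subst i0.
have [i0 [L2 s2]] := alpha_B h2; move/slI: s2 => s2; subst i0.
have [i0 [L3 s3]] := alpha_C h3; move/slI: s3 => s3; subst i0.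
have [i0 [L4 s4]] := alpha_C h4; move/slI: s4 => s4; subst i0.
rewrite -!eg // in e1 e2 n1 n2.
exact: (chain_sound L1 L2 L3 L4 e1 e2 n1 n2).
Qed.

Lemma embed_search : search Hn n.+1 [::].
Proof. have := search_sound ls_valid ls_chain; by rewrite size_mkseq. Qed.
End Embed.

Lemma path_last_rel (R : rel T) : transitive R -> reflexive R ->
  forall x s, path R x s -> forall y, y \in x :: s -> R y (last x s).
Proof.
move=> Rt Rr x s; elim: s x => [|z s IH] x /=.
  by move=> _ y; rewrite inE => /eqP ->.
move=> /andP[hxz hp] y; rewrite inE => /orP[/eqP -> |hy].
  exact: Rt hxz (IH z hp z (mem_head _ _)).
exact: IH.
Qed.

Section Rest.
Hypothesis ht : 3 <= t.

Let o0 : 'I_t := Ordinal (leq_trans (isT : 0 < 3) ht).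
Let o1 : 'I_t := Ordinal (leq_trans (isT : 1 < 3) ht).

Lemma other (i : 'I_t) : exists j : 'I_t, (j == i) = false.
Proof.
case hi: (o0 == i); last by exists o0.
exists o1; apply/negbTE; move/eqP: hi => <-; by [].
Qed.

Lemma getA : exists a, lab a = LA t.
Proof.
move: M => [_ [hA _ _ _] _ _ _]; have [a] := set0Pn _ hA.
by rewrite inE; case H: (lab a) => // _; exists a.
Qed.
Lemma getF : exists a, lab a = LF t.
Proof.
move: M => [_ [_ _ _ hA] _ _ _]; have [a] := set0Pn _ hA.
by rewrite inE; case H: (lab a) => // _; exists a.
Qed.
Lemma getC i : exists a, lab a = LC i.
Proof.
move: M => [_ [_ _ hA _] _ _ _]; have [a] := set0Pn _ (hA i).
by rewrite inE; case H: (lab a) => [|k|k|||] // /eqP hk; exists a; rewrite H hk.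
Qed.
Lemma getB i : exists a, lab a = LB i.
Proof.
move: M => [_ [_ hA _ _] _ _ _]; have [a] := set0Pn _ (hA i).
by rewrite inE; case H: (lab a) => [|k|k|||] // /eqP hk; exists a; rewrite H hk.
Qed.

Lemma getB1 i : exists b, lab b = LB i /\ forall c, lab c = LC i -> e b c.
Proof.
move: M => [_ _ [_ [_ [_ [_ [_ Hch]]]]] _ _].
have [b1 [s [hp _ hN _]]] := Hch i.
have : b1 \in enum [set x | if lab x is LB k then k == i else false].
  by rewrite -(perm_mem hp) mem_head.
rewrite mem_enum inE; case H: (lab b1) => [|k|k|||] // /eqP hk; subst k.
exists b1; split=> // c hc.
have : c \in nbr_in e b1 [set x | if lab x is LC k then k == i else false].
  by rewrite hN inE hc.
by rewrite /nbr_in inE => /andP[].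
Qed.

Lemma getNB x i : lab x = LB i -> exists c, lab c = LC i /\ e x c.
Proof.
move=> hx.
move: M => [_ _ [_ [_ [_ [_ [_ Hch]]]]] _ _].
have [b1 [s [hp hpath _ hL]]] := Hch i.
have xs : x \in b1 :: s by rewrite (perm_mem hp) mem_enum inE hx.
have Rtr : transitive (fun b b' => nbr_in e b' [set x | if lab x is LC k then k == i else false]
                          \subset nbr_in e b [set x | if lab x is LC k then k == i else false]).
  by move=> y z w h1 h2; exact: subset_trans h2 h1.
have Rrf : reflexive (fun b b' => nbr_in e b' [set x | if lab x is LC k then k == i else false]
                          \subset nbr_in e b [set x | if lab x is LC k then k == i else false]).
  by move=> y; exact: subxx.
have := path_last_rel Rtr Rrf hpath xs => /subsetP hsub.
have [c hc] := set0Pn _ hL.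
have := hsub c hc; rewrite /nbr_in inE => /andP[]; rewrite inE.
case H: (lab c) => [|k|k|||] // /eqP hk hxc; subst k.
by exists c.
Qed.


Ltac destM := move: (M) => [[cA [cB [cC [cF [cX cY]]]]] _ [AB [AC [BB [CC [BC _]]]]]
  [FA [FB [FC [FBC [BCJ [XAB [XB XC]]]]]]] [FXY XY YC YAB]]; have j0 := J.

Lemma nu_help x y : lab y <> lab x -> ~~ e x y -> ~ universal e x.
Proof.
move=> hl hn hu; have : y != x by apply/eqP => E; apply: hl; rewrite E.
by move/hu; rewrite (negbTE hn).
Qed.

Lemma no_universal x : ~ universal e x.
Proof.
destM; have [a Ha] := getA; have [f Hf] := getF.
case Hx: (lab x) => [|i|i|||].
- have [c Hc] := getC o0; apply: (nu_help (y:=c)); [by rewrite Hc Hx | edge_solve].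
- have [j hj] := other i; have [c Hc] := getC j.
  apply: (nu_help (y:=c)); [by rewrite Hc Hx | edge_solve].
- apply: (nu_help (y:=a)); [by rewrite Ha Hx | edge_solve].
- have [b Hb] := getB J; apply: (nu_help (y:=b)); [by rewrite Hb Hx | edge_solve].
- have [c Hc] := getC o0; apply: (nu_help (y:=c)); [by rewrite Hc Hx | edge_solve].
- apply: (nu_help (y:=a)); [by rewrite Ha Hx | edge_solve].
Unshelve. all: exact J.
Qed.

Lemma ns_help x y z : e x y -> e x z -> lab y <> lab z -> ~~ e y z -> ~ simplicial e x.
Proof.
move=> h1 h2 hl hn hs; have : y != z by apply/eqP => E; apply: hl; rewrite E.
by move/(hs y z h1 h2); rewrite (negbTE hn).
Qed.

Lemma no_simplicial x : ~ simplicial e x.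
Proof.
destM; have [a Ha] := getA; have [f Hf] := getF.
case Hx: (lab x) => [|i|i|||].
- have [j hj] := other o0; have [b Hb] := getB o0; have [b' Hb'] := getB j.
  apply: (ns_help (y:=b) (z:=b')); [edge_solve|edge_solve| by rewrite Hb Hb' => -[] E; move: hj; rewrite E eqxx | edge_solve].
- have [c [Hc hxc]] := getNB Hx.
  apply: (ns_help (y:=a) (z:=c)); [edge_solve| exact hxc | by rewrite Ha Hc | edge_solve].
- have [j hj] := other i; have [b [Hb hb]] := getB1 i; have [c Hc] := getC j.
  apply: (ns_help (y:=b) (z:=c)); [by rewrite esym; apply: hb| edge_solve | by rewrite Hb Hc | edge_solve].
- have [j hj] := other J; have [c Hc] := getC j.
  apply: (ns_help (y:=a) (z:=c)); [edge_solve| edge_solve | by rewrite Ha Hc | edge_solve].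
- have [b Hb] := getB J.
  apply: (ns_help (y:=f) (z:=b)); [edge_solve| edge_solve | by rewrite Hf Hb | edge_solve].
- have [c Hc] := getC J.
  apply: (ns_help (y:=f) (z:=c)); [edge_solve| edge_solve | by rewrite Hf Hc | edge_solve].
Unshelve. all: exact J.
Qed.

Lemma st x y : lab x <> lab y -> ~~ e x y -> connect (complement_rel e) x y.
Proof.
move=> hl hn; apply: connect1; rewrite /complement_rel hn andbT.
by apply/eqP => E; apply: hl; rewrite E.
Qed.

Lemma anticonn : anticonnected e.
Proof.
have csym : connect_sym (complement_rel e).
  apply: sym_connect_sym => x y; by rewrite /complement_rel eq_sym esym.
destM; have [a Ha] := getA.
have Cto c i : lab c = LC i -> connect (complement_rel e) c a.
  by move=> Hc; apply: st; [rewrite Hc Ha | edge_solve].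
suff H x : connect (complement_rel e) x a.
  by move=> x y; apply: connect_trans (H x) _; rewrite csym.
case Hx: (lab x) => [|i|i|||].
- have [c Hc] := getC o0; apply: connect_trans (Cto c o0 Hc).
  by apply: st; [rewrite Hc Hx | edge_solve].
- have [j hj] := other i; have [c Hc] := getC j; apply: connect_trans (Cto c j Hc).
  by apply: st; [rewrite Hc Hx | edge_solve].
- exact: Cto Hx.
- have [j hj] := other J; have [c Hc] := getC j; have [b Hb] := getB J.
  have hxb : connect (complement_rel e) x b by apply: st; [rewrite Hx Hb | edge_solve].
  apply: connect_trans hxb _; apply: connect_trans (Cto c j Hc).
  by apply: st; [rewrite Hb Hc | edge_solve].
- have [c Hc] := getC o0; apply: connect_trans (Cto c o0 Hc).
  by apply: st; [rewrite Hc Hx | edge_solve].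
- by apply: st; [rewrite Ha Hx | edge_solve].
Unshelve. all: exact J.
Qed.


Lemma pent : has_induced e (@pentagon_rel t).
Proof.
destM; have [a Ha] := getA.
pose bsel i := odflt a [pick b | (if lab b is LB k then k == i else false) &&
   [forall c, (if lab c is LC k then k == i else false) ==> e b c]].
pose csel i := odflt a [pick c | if lab c is LC k then k == i else false].
have hb i : lab (bsel i) = LB i /\ forall c, lab c = LC i -> e (bsel i) c.
  rewrite /bsel; case: pickP => [b /andP[hl /forallP hf] | hn] /=.
    split; first by move: hl; case: (lab b) => // k /eqP ->.
    by move=> c hc; have := hf c; rewrite hc eqxx.
  exfalso; have [b [hl hf]] := getB1 i; have := hn b; rewrite hl eqxx /=.
  suff -> : [forall c, (if lab c is LC k then k == i else false) ==> e b c] by [].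
  apply/forallP => c; apply/implyP; case Hc: (lab c) => [|k|k|||] //= /eqP hk.
  by apply: hf; rewrite Hc hk.
have hc i : lab (csel i) = LC i.
  rewrite /csel; case: pickP => [c hl | hn] /=.
    by move: hl; case: (lab c) => // k /eqP ->.
  by exfalso; have [c hl] := getC i; have := hn c; rewrite hl eqxx.
exists (fun o => match o with None => a | Some (inl i) => bsel i | Some (inr i) => csel i end).
split.
  move=> [[i|i]|] [[j|j]|] //= /(congr1 lab);
    rewrite ?Ha ?(proj1 (hb i)) ?(proj1 (hb j)) ?hc //; by case=> ->.
move=> [[i|i]|] [[j|j]|] /=; rewrite ?eirr //;
  try (have [Li Pi] := hb i); try (have [Lj Pj] := hb j);
  try (have Ci := hc i); try (have Cj := hc j).
- case: (eqVneq i j) => [<-|hij]; first by rewrite eirr.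
  have hij' := negbTE hij; apply/negbTE; edge_solve.
- case: (eqVneq i j) => [<-|hij]; first by apply: Pi.
  have hij' := negbTE hij; apply/negbTE; edge_solve.
- edge_solve.
- case: (eqVneq i j) => [<-|hij]; first by rewrite esym; apply: Pi.
  have hij' := negbTE hij; apply/negbTE; edge_solve.
- case: (eqVneq i j) => [<-|hij]; first by rewrite eirr.
  have hij' := negbTE hij; rewrite ?hij /=; edge_solve.
- apply/negbTE; edge_solve.
- edge_solve.
- apply/negbTE; edge_solve.
Unshelve. all: exact J.
Qed.

End Rest.
End Concrete.

Lemma t4 : search (cycn 4) 4 [::] = false. Proof. by vm_compute. Qed.
Lemma t6 : search (cycn 6) 6 [::] = false. Proof. by vm_compute. Qed.
Lemma t7 : search (cycn 7) 7 [::] = false. Proof. by vm_compute. Qed.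
Lemma t2p3 : search (edn [:: (0,1); (1,2); (3,4); (4,5)]) 6 [::] = false.
Proof. by vm_compute. Qed.
Lemma tT0 : search (edn [:: (0,1); (0,2); (0,4); (0,5); (1,3); (1,4); (1,5); (2,6); (3,6); (4,7);
      (5,8); (6,7); (6,8); (7,8)]) 9 [::] = false.
Proof. by vm_compute. Qed.

Theorem proposition5p4 (t : nat) (ht : (3 <= t)%N) (T : finType) (e : rel T)
  (esym : symmetric e) (eirr : irreflexive e) :
  is_mansion e t ->
  [/\ ~ has_induced e twoP3 /\
      ~ has_induced e (@cycle_rel 4) /\
      ~ has_induced e (@cycle_rel 6) /\
      ~ has_induced e (@cycle_rel 7) /\
      ~ has_induced e T0,
      has_induced e (@pentagon_rel t),
      anticonnected e,
      (forall x : T, ~ simplicial e x) &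
      (forall x : T, ~ universal e x)].
Proof.
move=> [lab [J M]]; split.
- split; [|split; [|split; [|split]]]; move=> [f [finj hf]].
  + have := @embed_search T e t lab J esym M 5 f (edn [:: (0,1); (1,2); (3,4); (4,5)]) finj hf.
    by rewrite t2p3.
  + have := @embed_search T e t lab J esym M 3 f (cycn 4) finj hf.
    by rewrite t4.
  + have := @embed_search T e t lab J esym M 5 f (cycn 6) finj hf.
    by rewrite t6.
  + have := @embed_search T e t lab J esym M 6 f (cycn 7) finj hf.
    by rewrite t7.
  + have := @embed_search T e t lab J esym M 8 f (edn [:: (0,1); (0,2); (0,4); (0,5); (1,3); (1,4); (1,5); (2,6); (3,6); (4,7);
      (5,8); (6,7); (6,8); (7,8)]) finj hf.
    by rewrite tT0.
- exact: pent esym eirr M.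
- exact: anticonn esym M ht.
- by move=> x; exact: (@no_simplicial T e t lab J esym M ht x).
- by move=> x; exact: (@no_universal T e t lab J esym M ht x).
Qed.
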